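(* Consider the following stochastic evolution model. A finite domain $M_d$ (a ball of diameter $d$) of a convex, normal, balanced planar mosaic is described by $J+1$ nonnegative combinatorial counting variables $X_0,X_1,\dots,X_J$ (with $X_0=N^{\star}$, the total corner degree), each of which grows as $X_j\asymp d^2$ as $d\to\infty$; write $x_j=X_j/X_0$ for $j=1,\dots,J$ and $\underline{x}=(x_1,\dots,x_J)$. The evolution is driven by micro-events of $I+1$ types $R_0,\dots,R_I$. Events of type $R_i$ are triggered by clocks, the number of which is $C_i=\sum_{j=0}^J C_{i,j}X_j$ (with given deterministic coefficients $C_{i,j}$); each individual clock of type $R_i$ gives signals at the times of independent exponential random variables with parameter $\lambda_i>0$. When a micro-event of type $R_i$ occurs, each $X_j$ changes by a deterministic increment $\Delta X_j(i)$. Define $\gamma_i(\underline{x})=C_i\lambda_i/X_0$, $\gamma(\underline{x})=\sum_{i=0}^I\gamma_i(\underline{x})$, $p_i(\underline{x})=\gamma_i(\underline{x})/\gamma(\underline{x})$, $\nu_j(\underline{x})=\sum_{i=0}^I\Delta X_j(i)\,p_i(\underline{x})$ for $j=0,\dots,J$, and $\hat x_j(\underline{x})=\nu_j(\underline{x})/\nu_0(\underline{x})$. Assume that at time $t$ the (deterministic) state of the mosaic is given by $\underline{x}=(x_1(t),\dots,x_J(t))$, and let $\underline{\mathbf{x}}(t+\Delta t)=(\mathbf{x}_1(t+\Delta t),\dots,\mathbf{x}_J(t+\Delta t))$ denote the random state at time $t+\Delta t$. Consider a simultaneous limit parametrized by $\rho\to\infty$ in which $d(\rho)\to\infty$, $\Delta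 t(\rho)\to 0$ and $d(\rho)\,\Delta t(\rho)$ is constant in $\rho$. Then in this limit, for each $j=1,\dots,J$, the random variables $$\frac{\mathbf{x}_j(t+\Delta t)-x_j(t)}{\Delta t}$$ converge in probability to $$\gamma(\underline{x})\cdot\nu_0(\underline{x})\cdot\bigl(\hat x_j(\underline{x})-x_j\bigr),$$ i.e. to the right-hand side of the ODE $\frac{dx_j}{dt}=\gamma(\underline{x})\,\nu_0(\underline{x})\,(\hat x_j(\underline{x})-x_j)$.
   Context: A mosaic is a tessellation of the plane by convex polygonal cells; ''balanced'' (in the sense of Grünbaum–Shephard) means in particular that counts of cells, nodes and corner degrees in a ball of diameter $d$ are all of order $d^2$. Notation $f\asymp g$ means $C^{-1}g\le f\le Cg$ for a constant $C>0$ independent of $d$. The corner degree $N^{\star}$ is the sum over cells of the number of their regular vertices (points where two edges of the cell meet at an angle different from $\pi$), averaged with the analogous sum over nodes. The cumulative process of all micro-events is a Poisson process whose expected interarrival time $E(\Delta\mathbf{T})$ satisfies $1/E(\Delta\mathbf{T})=\sum_i C_i\lambda_i=X_0\gamma(\underline{x})$. The increments of $X_j$ over $[t,t+\Delta t]$ are the sums of the deterministic increments of all micro-events occurring in that interval. *)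

(* Defs.v *)
From HB Require Import structures.
From mathcomp Require Import all_boot all_order all_algebra.
From mathcomp Require Import all_classical all_reals all_analysis.
Set Implicit Arguments. Unset Strict Implicit. Unset Printing Implicit Defensive.
Import Order.TTheory GRing.Theory Num.Theory.
Import numFieldNormedType.Exports.
Local Open Scope classical_set_scope.
Local Open Scope ring_scope.

Section Defs.
Context {R : realType} {d : measure_display} {T : measurableType d}.

Definition is_poisson (P : probability T R) (N : {RV P >-> R}) (mu : R) : Prop :=
  forall k : nat,
    P [set w | N w = k%:R] = (mu ^+ k / (k`!)%:R * expR (- mu))%:E.

Definition mutually_independent (P : probability T R) (n : nat)
    (N : 'I_n -> {RV P >-> R}) : Prop :=
  forall B : 'I_n -> set R, (forall i, measurable (B i)) ->
    P (\bigcap_(i in [set: 'I_n]) (N i @^-1` B i)) =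
    (\prod_(i < n) P (N i @^-1` B i))%E.

Definition cvg_in_prob (P : probability T R) (Y : nat -> T -> R) (c : R) : Prop :=
  forall eps : R, 0 < eps ->
    P [set w | eps <= `|Y n w - c|] @[n --> \oo] --> 0%E.

End Defs.

(* Indices: j : 'I_J.+1 for the
   variables X_0..X_J, i : 'I_I.+1 for the event types R_0..R_I.
   xe x is the extended state (x_0 = X_0/X_0 = 1, x_1, ..., x_J). *)
Section Model.
Context {R : realType} (I J : nat).
Variables (Ccoef : 'I_I.+1 -> 'I_J.+1 -> R) (lambda : 'I_I.+1 -> R)
          (DeltaX : 'I_I.+1 -> 'I_J.+1 -> int).

Definition xe (x : 'I_J -> R) (j : 'I_J.+1) : R :=
  match unlift ord0 j with Some j' => x j' | None => 1 end.

Definition clocks (X : 'I_J.+1 -> R) (i : 'I_I.+1) : R :=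
  \sum_(j < J.+1) Ccoef i j * X j.

(* gamma_i(x) = C_i lambda_i / X_0, written in terms of x_j = X_j / X_0 *)
Definition gamma_i (x : 'I_J -> R) (i : 'I_I.+1) : R :=
  clocks (xe x) i * lambda i.

Definition gamma (x : 'I_J -> R) : R := \sum_(i < I.+1) gamma_i x i.

Definition p_i (x : 'I_J -> R) (i : 'I_I.+1) : R := gamma_i x i / gamma x.

Definition nu (x : 'I_J -> R) (j : 'I_J.+1) : R :=
  \sum_(i < I.+1) (DeltaX i j)%:~R * p_i x i.

Definition xhat (x : 'I_J -> R) (j : 'I_J.+1) : R := nu x j / nu x ord0.

End Model.

(* Main.v *)
Require Import Defs.
From HB Require Import structures.
From mathcomp Require Import all_boot all_order all_algebra.
From mathcomp Require Import all_classical all_reals all_analysis.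
From mathcomp Require Import ring lra.
Import Order.TTheory GRing.Theory Num.Theory.
Import numFieldNormedType.Exports.
Local Open Scope classical_set_scope.
Local Open Scope ring_scope.

Lemma exp_series_E (R : realType) (y : R) :
  (\sum_(0 <= k <oo) ((y ^+ k / k`!%:R)%:E))%E = (expR y)%:E.
Proof.
rewrite /expR -EFin_lim; last exact: is_cvg_series_exp_coeff.
apply/congr_lim/funext => n /=; rewrite /series /= -sumEFin //.
Qed.

Lemma pois_gen (R : realType) (mu s : R) : 0 <= mu ->
  (\sum_(0 <= k <oo) ((mu ^+ k / k`!%:R * expR (- mu)) * expR (s * k%:R))%:E)%E
  = (expR (mu * (expR s - 1)))%:E.
Proof.
move=> mu0.
under eq_eseriesr => k _.
  rewrite (_ : _ * _ = expR (- mu) * ((mu * expR s) ^+ k / k`!%:R)); last first.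
    by rewrite expRM_natr exprMn; field; rewrite pnatr_eq0 -lt0n fact_gt0.
  rewrite EFinM; over.
rewrite nneseriesZl /=; last first.
  by move=> k _; rewrite lee_fin divr_ge0 // exprn_ge0 // mulr_ge0 // expR_ge0.
rewrite exp_series_E -EFinM -expRD; congr (expR _)%:E; lra.
Qed.

Lemma pois_sum1 (R : realType) (mu : R) : 0 <= mu ->
  (\sum_(0 <= k <oo) ((mu ^+ k / k`!%:R * expR (- mu)))%:E)%E = 1%E.
Proof.
move=> mu0; have := @pois_gen R mu 0 mu0.
rewrite expR0 subrr mulr0 expR0 => <-.
by apply: eq_eseriesr => k _; rewrite mul0r expR0 mulr1.
Qed.

Lemma pois_le (R : realType) d (T : measurableType d) (P : probability T R)
  (N : {RV P >-> R}) (mu : R) (Q : set R) (g : nat -> R) :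
  0 <= mu -> is_poisson N mu -> measurable Q -> (forall k, 0 <= g k) ->
  (forall k : nat, Q k%:R -> 1 <= g k) ->
  (P (N @^-1` Q) <=
     \sum_(0 <= k <oo) ((mu ^+ k / k`!%:R * expR (- mu)) * g k)%:E)%E.
Proof.
move=> mu0 hp mQ g0 gQ.
pose E k := N @^-1` [set (k%:R : R)].
have mE k : measurable (E k) by apply: measurable_funPTI.
have mNQ : measurable (N @^-1` Q) by apply: measurable_funPTI.
have tE : trivIset setT E.
  apply/trivIsetP => i j _ _ ij; apply/seteqP; split => // w [].
  rewrite /E /preimage /= => -> /eqP; by rewrite eqr_nat (negbTE ij).
pose U := \bigcup_k E k.
have mU : measurable U by apply: bigcupT_measurable.
have PU : P U = 1%E.
  rewrite measure_semi_bigcup //.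
  rewrite -(@pois_sum1 R mu mu0); apply: eq_eseriesr => k _; exact: hp.
have PC : P (~` U) = 0%E by rewrite probability_setC // PU subee.
have sub : N @^-1` Q `<=` (\bigcup_k (E k `&` N @^-1` Q)) `|` ~` U.
  move=> w Qw; have [Uw|nUw] := pselect (U w); last by right.
  by left; case: Uw => k _ Ek; exists k.
have mB k : measurable (E k `&` N @^-1` Q) by apply: measurableI.
have mBU : measurable (\bigcup_k (E k `&` N @^-1` Q)) by apply: bigcupT_measurable.
apply: (le_trans (le_measure _ _ _ sub)); rewrite ?inE //.
  by apply: measurableU => //; apply: measurableC.
apply: (@le_trans _ _ (P (\bigcup_k (E k `&` N @^-1` Q)) + P (~` U))%E).
  by apply: measureU2 => //; apply: measurableC.
rewrite PC adde0 measure_semi_bigcup //; last first.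
  apply/trivIsetP => i j _ _ ij; move/trivIsetP: tE => /(_ i j I I ij).
  by move=> h; apply/seteqP; split => // w [[Ei _] [Ej _]]; rewrite -h.
apply: lee_nneseries => [k _ _|k _]; first exact: measure_ge0.
have [Qk|nQk] := pselect (Q k%:R).
  rewrite (_ : E k `&` _ = E k); last first.
    by apply/seteqP; split => w; [case | move=> Ek; split => //; rewrite /= Ek].
  have hk : P (E k) = ((mu ^+ k / k`!%:R * expR (- mu)))%:E := hp k.
  apply: (@le_trans _ _ ((mu ^+ k / k`!%:R * expR (- mu)))%:E).
    by rewrite le_eqVlt; apply/orP; left; apply/eqP; exact: hk.
  rewrite lee_fin ler_peMr ?gQ //.
  by rewrite mulr_ge0 ?expR_ge0 // divr_ge0 // exprn_ge0.
rewrite (_ : E k `&` _ = set0) ?measure0; last first.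
  by apply/seteqP; split => // w [/= Ek]; rewrite /preimage /= Ek.
by rewrite lee_fin mulr_ge0 // mulr_ge0 ?expR_ge0 // divr_ge0 // exprn_ge0.
Qed.
Lemma far_meas {R : realType} (a t : R) : measurable [set r : R | t <= `|r - a|].
Proof.
rewrite (_ : [set r | _] = `]-oo, a - t] `|` `[a + t, +oo[).
  by apply: measurableU; apply: measurable_itv.
apply/seteqP; split => r /=; rewrite !in_itv /= ?andbT.
  by rewrite ler_normr => /orP [h|h]; [right|left]; lra.
by case => h; rewrite ler_normr; apply/orP; [right|left]; lra.
Qed.

Lemma pois_tail (R : realType) d (T : measurableType d) (P : probability T R)
  (N : {RV P >-> R}) (mu t s : R) :
  0 <= mu -> is_poisson N mu -> 0 <= s ->
  (P [set w | (t <= `|N w - mu|)%R] <=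
   (expR (- (s * (mu + t))) * expR (mu * (expR s - 1)) +
    expR (s * (mu - t)) * expR (mu * (expR (- s) - 1)))%:E)%E.
Proof.
move=> mu0 hp s0.
pose g (k : nat) := expR (- (s * (mu + t))) * expR (s * k%:R) +
                    expR (s * (mu - t)) * expR ((- s) * k%:R).
have := @pois_le R d T P N mu [set r | t <= `|r - mu|] g mu0 hp (far_meas mu t).
move=> H; apply: (le_trans (H _ _)).
- by move=> k; rewrite /g addr_ge0 // mulr_ge0 // expR_ge0.
- move=> k /=; rewrite ler_normr => /orP [h|h]; rewrite /g -!expRD.
    have e1 := expR_ge1Dx (- (s * (mu + t)) + s * k%:R).
    have e2 := expR_ge0 (s * (mu - t) + - s * k%:R).
    have : 0 <= s * (k%:R - mu - t) by apply: mulr_ge0 => //; lra.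
    lra.
  have e1 := expR_ge0 (- (s * (mu + t)) + s * k%:R).
  have e2 := expR_ge1Dx (s * (mu - t) + - s * k%:R).
  have : 0 <= s * (mu - t - k%:R) by apply: mulr_ge0 => //; lra.
  lra.
have pm0 k : 0 <= mu ^+ k / k`!%:R * expR (- mu).
  by rewrite mulr_ge0 ?expR_ge0 // divr_ge0 // exprn_ge0.
under eq_eseriesr => k _.
  rewrite (_ : _ * g k = expR (- (s * (mu + t))) *
      (mu ^+ k / k`!%:R * expR (- mu) * expR (s * k%:R)) +
      expR (s * (mu - t)) *
      (mu ^+ k / k`!%:R * expR (- mu) * expR ((- s) * k%:R))); last first.
    by rewrite /g; ring.
  rewrite EFinD !EFinM; over.
rewrite nneseriesD /=; last 2 first.
- by move=> k _ _; rewrite -EFinM lee_fin mulr_ge0 ?expR_ge0 // mulr_ge0 ?expR_ge0.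
- by move=> k _ _; rewrite -EFinM lee_fin mulr_ge0 ?expR_ge0 // mulr_ge0 ?expR_ge0.
rewrite !nneseriesZl /=; last 2 first.
- by move=> k _; rewrite lee_fin mulr_ge0 ?expR_ge0.
- by move=> k _; rewrite lee_fin mulr_ge0 ?expR_ge0.
by rewrite !pois_gen // -!EFinM -EFinD.
Qed.
Lemma exp_bounds {R : realType} (g del : R) : 0 <= g -> 0 < del ->
  let s := del / (2 * (g + del)) in
  - (s * (g + del)) + g * (expR s - 1) <= - (s * del / 2) /\
  s * (g - del) + g * (expR (- s) - 1) <= - (s * del / 2).
Proof.
move=> g0 d0 s.
have a0 : 0 < 2 * (g + del) by lra.
have sa : s * (2 * (g + del)) = del by rewrite /s divfK // gt_eqF.
have s0 : 0 < s by rewrite /s divr_gt0.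
have gs : g * s <= del / 2.
  have : g * s * (2 * (g + del)) <= del / 2 * (2 * (g + del)).
    rewrite -mulrA sa; nra.
  by rewrite ler_pM2r.
have sg : s * (g + del) = del / 2 by lra.
have es1 := expR_ge1Dx s.
have ems1 := expR_ge1Dx (- s).
have ee : expR s * expR (- s) = 1 by rewrite expRxMexpNx_1.
have ep := expR_gt0 s.
have emp := expR_gt0 (- s).
split.
  set u := expR s.
  have es1' : 1 + s <= u := es1.
  have ep' : 0 < u := ep.
  have H1 : u * (1 - s) <= 1.
    have : u * (1 - s) <= u * expR (- s) by rewrite ler_pM2l //; lra.
    by rewrite ee.
  have H2 : (2 * g + del) * (u - 1) <= del.
    have : u * (1 - s) * (2 * (g + del)) <= 2 * (g + del) by nra.
    have -> : u * (1 - s) * (2 * (g + del)) = u * (2 * g + del).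
      by rewrite -mulrA mulrBl mul1r sa; ring.
    lra.
  have hv : del * s <= del * (u - 1) by rewrite ler_pM2l //; lra.
  lra.
set w := expR (- s).
have ems1' : 1 - s <= w := ems1.
have emp' : 0 < w := emp.
have H1 : w * (1 + s) <= 1.
  have : w * (1 + s) <= w * expR s by rewrite ler_pM2l //; lra.
  by rewrite [w * expR s]mulrC ee.
have hz : s <= (1 - w) * (1 + s) by nra.
have h1 : g * s <= g * ((1 - w) * (1 + s)) by apply: ler_wpM2l.
have h2 : g * (1 - w) <= g * s by apply: ler_wpM2l => //; lra.
have h3 : s * (g * (1 - w)) <= s * (del / 2) by rewrite ler_pM2l //; lra.
lra.
Qed.
Lemma pois_dev {R : realType} d (T : measurableType d) (P : probability T R)
  (N : {RV P >-> R}) (K g del : R) : 0 < K -> 0 <= g -> 0 < del ->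
  is_poisson N (K * g) ->
  (P [set w | (del <= `|N w / K - g|)%R] <=
    (expR (- (K * (del / (2 * (g + del)) * del / 2))) *+ 2)%:E)%E.
Proof.
move=> K0 g0 d0 hp.
have -> : [set w | (del <= `|N w / K - g|)%R] =
          [set w | (K * del <= `|N w - K * g|)%R].
  apply/seteqP; split => w /=.
    rewrite (_ : N w / K - g = (N w - K * g) / K); last by field; rewrite gt_eqF.
    by rewrite normf_div (gtr0_norm K0) ler_pdivlMr // mulrC.
  rewrite (_ : N w / K - g = (N w - K * g) / K); last by field; rewrite gt_eqF.
  by rewrite normf_div (gtr0_norm K0) ler_pdivlMr // mulrC.
have Kg0 : 0 <= K * g by rewrite mulr_ge0 // ltW.
set s := del / (2 * (g + del)).
have s0 : 0 <= s by rewrite /s divr_ge0 //; lra.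
apply: (le_trans (@pois_tail R d T P N (K * g) (K * del) s Kg0 hp s0)).
have [b1 b2] := @exp_bounds R g del g0 d0; rewrite -/s in b1 b2.
rewrite lee_fin mulr2n; apply: lerD; rewrite -expRD ler_expR.
  have -> : - (s * (K * g + K * del)) + K * g * (expR s - 1) =
            K * (- (s * (g + del)) + g * (expR s - 1)) by ring.
  by rewrite -[X in _ <= X]mulrN ler_pM2l.
have -> : s * (K * g - K * del) + K * g * (expR (- s) - 1) =
          K * (s * (g - del) + g * (expR (- s) - 1)) by ring.
by rewrite -[X in _ <= X]mulrN ler_pM2l.
Qed.
Lemma ev_cvg0 {R : realType} (u : nat -> \bar R) :
  (forall n, (0 <= u n)%E) ->
  (forall eta : R, 0 < eta -> exists N, forall n, (N <= n)%N -> (u n <= eta%:E)%E) ->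
  u @ \oo --> 0%E.
Proof.
move=> u0 h; apply/fine_cvgP; split.
  have [N HN] := h 1 ltr01; exists N => // n /= Nn.
  have := HN n Nn; have := u0 n; case: (u n) => //.
apply/cvgr0Pnorm_lt => e e0.
have [N HN] : exists N, forall n, (N <= n)%N -> (u n <= (e / 2)%:E)%E by apply: h; lra.
exists N => // n /= Nn.
have := HN n Nn; have := u0 n; case: (u n) => [r| |] //=; rewrite !lee_fin => r0 re.
rewrite ger0_norm //; lra.
Qed.

Lemma meas_inv {R : realType} : measurable_fun setT (fun x : R => x^-1).
Proof.
move=> _ B mB; rewrite setTI.
rewrite (_ : _ @^-1` B = ((fun x : R => x^-1) @^-1` B `&` [set 0]) `|`
    (~` [set 0] `&` (fun x : R => x^-1) @^-1` B)); last first.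
  apply/seteqP; split => x /=.
    move=> Bx; have [x0|x0] := eqVneq x 0; [left|right]; split => //.
    exact/eqP.
  by case => -[].
apply: measurableU.
  have [B0|nB0] := pselect (B 0).
    rewrite (_ : _ `&` _ = [set 0]) //.
    apply/seteqP; split => x /=; first by case.
    by move=> ->; split => //; rewrite /preimage /= invr0.
  rewrite (_ : _ `&` _ = set0) //.
  by apply/seteqP; split => x //= [Bx x0]; apply: nB0; move: Bx; rewrite /preimage /= x0 invr0.
have : measurable_fun (~` [set (0:R)]) (fun x : R => x^-1).
  apply: measurable_realfun.open_continuous_measurable_fun.
    rewrite openC; apply: accessible_closed_set1; apply: hausdorff_accessible.
    exact: Rhausdorff.
  move=> x; rewrite inE /= => x0; apply: inv_continuous; exact/eqP.
move=> h; apply: h => //; apply: measurableC; exact: measurable_set1.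
Qed.
Lemma union_bound {R : realType} d (T : measurableType d) (P : probability T R)
  n (B : 'I_n -> set T) : (forall i, measurable (B i)) ->
  (P (\big[setU/set0]_(i < n) B i) <= \sum_(i < n) P (B i))%E.
Proof.
elim: n B => [|n IH] B mB.
  by rewrite !big_ord0 measure0.
rewrite !big_ord_recr /=.
have mU : measurable (\big[setU/set0]_(i < n) B (widen_ord (leqnSn n) i)).
  by apply: bigsetU_measurable => i _.
apply: (@le_trans _ _ (P (\big[setU/set0]_(i < n) B (widen_ord (leqnSn n) i)) + P (B ord_max))%E).
  exact: measureU2.
apply: leeD => //; exact: IH.
Qed.

Lemma Y_formula {R : realFieldType} (m D xj Sj S0 : R) : 0 < m -> 0 < D ->
  0 < 1 + D * S0 ->
  ((xj * m + m * D * Sj) / (m + m * D * S0) - xj) / D = (Sj - xj * S0) / (1 + D * S0).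
Proof.
move=> m0 D0 q0.
rewrite (_ : m + m * D * S0 = m * (1 + D * S0)); last by ring.
field; rewrite ?gt_eqF // ?mulf_neq0 ?gt_eqF //.
Qed.

Lemma core_bound {R : realFieldType} (A E D S0 : R) : 0 <= D ->
  1 / 2 <= 1 + D * S0 ->
  `|(A + E) / (1 + D * S0) - A| <= 2 * (`|E| + `|A| * D * `|S0|).
Proof.
move=> D0 q2.
have q0 : 0 < 1 + D * S0 by lra.
rewrite (_ : (A + E) / (1 + D * S0) - A = (E - A * D * S0) / (1 + D * S0)); last first.
  by field; rewrite gt_eqF.
rewrite normf_div (gtr0_norm q0) ler_pdivrMr // .
have h1 : `|E - A * D * S0| <= `|E| + `|A| * D * `|S0|.
  apply: (le_trans (ler_normB _ _)).
  by rewrite !normrM (ger0_norm D0).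
have h2 : 0 <= `|E| + `|A| * D * `|S0|.
  by rewrite addr_ge0 // mulr_ge0 // mulr_ge0.
have : 2 * (`|E| + `|A| * D * `|S0|) * (1/2) <= 2 * (`|E| + `|A| * D * `|S0|) * (1 + D * S0).
  by apply: ler_wpM2l => //; rewrite mulr_ge0.
lra.
Qed.
Lemma mem_bigsetU_ord {T : Type} n (B : 'I_n -> set T) (w : T) (i : 'I_n) :
  B i w -> (\big[setU/set0]_(k < n) B k) w.
Proof. by move=> Biw; rewrite (bigD1 i) //=; left. Qed.

Lemma far_pre {R : realType} d (T : measurableType d) (f : T -> R) (a t : R) :
  measurable_fun setT f -> measurable [set w | t <= `|f w - a|].
Proof. by move=> mf; have := mf measurableT _ (far_meas a t); rewrite setTI. Qed.
Lemma det_core {R : realFieldType} n (a b gam Nw : 'I_n -> R) (m D xj del eps : R) :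
  0 < m -> 0 < D -> 0 < del -> del <= 1 ->
  del * (\sum_(i < n) `|b i - xj * a i|) <= eps / 4 ->
  D < 1 / (2 * (\sum_(i < n) (`|gam i| + 1) * `|a i| + 1)) ->
  D < eps / (4 * ((`|\sum_(i < n) gam i * (b i - xj * a i)| + 1) *
                  (\sum_(i < n) (`|gam i| + 1) * `|a i| + 1))) ->
  (forall i, `|Nw i / (m * D) - gam i| < del) ->
  `|((xj * m + \sum_(i < n) Nw i * b i) / (m + \sum_(i < n) Nw i * a i) - xj) / D
     - \sum_(i < n) gam i * (b i - xj * a i)| < eps.
Proof.
set C1 := \sum_(i < n) `|b i - xj * a i|.
set C2 := \sum_(i < n) (`|gam i| + 1) * `|a i|.
set A := \sum_(i < n) gam i * (b i - xj * a i).
move=> m0 D0 del0 del1 hC1 hD1 hD2 he.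
have K0 : 0 < m * D by apply: mulr_gt0.
pose e i := Nw i / (m * D) - gam i.
pose S0 := \sum_(i < n) (gam i + e i) * a i.
pose Sj := \sum_(i < n) (gam i + e i) * b i.
have sumK (c : 'I_n -> R) : \sum_(i < n) Nw i * c i = m * D * \sum_(i < n) (gam i + e i) * c i.
  rewrite mulr_sumr; apply: eq_bigr => i _; rewrite /e; field.
  by rewrite !gt_eqF.
rewrite !sumK -/S0 -/Sj.
have C20 : 0 <= C2 by rewrite /C2 sumr_ge0 // => i _; rewrite mulr_ge0 // addr_ge0.
have C10 : 0 <= C1 by rewrite /C1 sumr_ge0.
have S0C2 : `|S0| <= C2.
  apply: (le_trans (ler_norm_sum _ _ _)); apply: ler_sum => i _.
  rewrite normrM ler_wpM2r //; apply: (le_trans (ler_normD _ _)).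
  rewrite lerD2l; have h : `|e i| < del by exact: he i.
  by apply: ltW; exact: lt_le_trans h del1.
have DC2 : D * C2 < 1 / 2.
  move: hD1; rewrite ltr_pdivlMr; last by lra.
  lra.
have DS0 : D * `|S0| <= D * C2 by rewrite ler_pM2l.
have q2 : 1 / 2 <= 1 + D * S0.
  have : - (D * S0) <= D * `|S0|.
    have h := ler_norm (- (D * S0)).
    by rewrite normrN normrM (gtr0_norm D0) in h.
  lra.
rewrite Y_formula //; last by lra.
have SA : Sj - xj * S0 = A + \sum_(i < n) e i * (b i - xj * a i).
  rewrite /Sj /S0 /A mulr_sumr -sumrB -big_split /=.
  by apply: eq_bigr => i _; ring.
rewrite SA.
apply: (le_lt_trans (@core_bound R A _ D S0 (ltW D0) q2)).
have hE : `|\sum_(i < n) e i * (b i - xj * a i)| <= del * C1.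
  apply: (le_trans (ler_norm_sum _ _ _)); rewrite /C1 mulr_sumr.
  apply: ler_sum => i _; rewrite normrM; apply: ler_wpM2r => //; exact: ltW (he i).
set Q := (`|A| + 1) * (C2 + 1).
have Q0 : 0 < Q by rewrite /Q mulr_gt0 //; have := normr_ge0 A; lra.
have hDQ : D * Q < eps / 4.
  move: hD2; rewrite ltr_pdivlMr; last by apply: mulr_gt0 => //; exact: Q0.
  move=> h.
  have : D * (4 * Q) < eps by [].
  lra.
have hA0 := normr_ge0 A.
have hAS : `|A| * D * `|S0| <= `|A| * D * C2.
  by rewrite -!mulrA ler_wpM2l // ler_pM2l.
have hQ : `|A| * D * C2 <= D * Q.
  rewrite /Q.
  have p1 : 0 <= `|A| * D by rewrite mulr_ge0 // ltW.
  have p2 : 0 <= D * C2 by rewrite mulr_ge0 // ltW.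
  have p3 : 0 <= `|A| * D * C2 by rewrite mulr_ge0.
  have -> : D * ((`|A| + 1) * (C2 + 1)) = `|A| * D * C2 + `|A| * D + D * C2 + D by ring.
  lra.
lra.
Qed.

Theorem theorem1
  (R : realType) (dsp : measure_display) (T : measurableType dsp)
  (P : probability T R)
  (I J : nat)
  (Ccoef : 'I_I.+1 -> 'I_J.+1 -> R) (lambda : 'I_I.+1 -> R)
  (DeltaX : 'I_I.+1 -> 'I_J.+1 -> int)
  (x : 'I_J -> R)
  (diam Dt : nat -> R) (X : nat -> 'I_J.+1 -> nat)
  (N : nat -> 'I_I.+1 -> {RV P >-> R}) :
  (* rates of the clocks are positive *)
  (forall i, 0 < lambda i) ->
  (* the limit rho -> oo: d -> oo, Dt -> 0, Dt > 0, d * Dt constant *)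
  diam @ \oo --> +oo ->
  Dt @ \oo --> 0 ->
  (forall rho, 0 < Dt rho) ->
  (exists kappa : R, forall rho, diam rho * Dt rho = kappa) ->
  (* X_j asymp d^2 *)
  (exists c : R, 0 < c /\ forall rho j,
      c^-1 * diam rho ^+ 2 <= (X rho j)%:R <= c * diam rho ^+ 2) ->
  (* the state at time t is x: x_j = X_j / X_0 *)
  (forall rho (j : 'I_J), (X rho (lift ord0 j))%:R = x j * (X rho ord0)%:R) ->
  (* the numbers of clocks C_i = sum_j C_ij X_j are nonnegative *)
  (forall rho i, 0 <= clocks Ccoef (fun j => (X rho j)%:R) i) ->
  (* the mean-field quantities are well defined *)
  gamma Ccoef lambda x != 0 ->
  nu Ccoef lambda DeltaX x ord0 != 0 ->
  (* N rho i = number of micro-events of type R_i in [t, t + Dt]: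
     superposition of C_i independent clocks of rate lambda_i *)
  (forall rho i, is_poisson (N rho i)
       (clocks Ccoef (fun j => (X rho j)%:R) i * lambda i * Dt rho)) ->
  (forall rho, mutually_independent (N rho)) ->
  forall j : 'I_J,
    let Xnew rho (k : 'I_J.+1) (w : T) : R :=
      (X rho k)%:R + \sum_(i < I.+1) N rho i w * (DeltaX i k)%:~R in
    cvg_in_prob P
      (fun rho w => (Xnew rho (lift ord0 j) w / Xnew rho ord0 w - x j) / Dt rho)
      (gamma Ccoef lambda x * nu Ccoef lambda DeltaX x ord0 *
         (xhat Ccoef lambda DeltaX x (lift ord0 j) - x j)).
Proof.
move=> hlam hd hD hDpos [kap hkap] [c0 [c0pos hX]] hx hclk hg hnu hpois _ j Xnew eps eps0.
pose m rho : R := (X rho ord0)%:R.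
pose gam i := gamma_i Ccoef lambda x i.
have clkE rho i : clocks Ccoef (fun k => (X rho k)%:R) i = m rho * clocks Ccoef (xe x) i.
  rewrite /clocks big_ord_recl [in RHS]big_ord_recl mulrDr mulr_sumr.
  congr (_ + _).
    by rewrite /xe unlift_none mulr1 mulrC.
  by apply: eq_bigr => k _; rewrite /xe liftK hx /m; ring.
have [N1 _ HN1] : \forall rho \near \oo, 1 <= diam rho by move/cvgryPge: hd; apply.
have ci : 0 < c0^-1 by rewrite invr_gt0.
have m_pos rho : (N1 <= rho)%N -> c0^-1 <= m rho.
  move=> h; have dd := HN1 rho h.
  have d2 : 1 <= diam rho ^+ 2 by rewrite expr2; nra.
  have /andP[h1 _] := hX rho ord0.
  have : c0^-1 * 1 <= c0^-1 * diam rho ^+ 2 by rewrite ler_pM2l.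
  rewrite /m; lra.
have kap0 : 0 < kap by rewrite -(hkap N1); apply: mulr_gt0 => //; have := HN1 N1 (leqnn _); lra.
have gam0 i : 0 <= gam i.
  have := hclk N1 i; rewrite clkE => h.
  have mp : 0 < m N1 by have := m_pos N1 (leqnn _); lra.
  have hc : 0 <= clocks Ccoef (xe x) i by rewrite -(pmulr_rge0 _ mp).
  by rewrite /gam /gamma_i mulr_ge0 // ltW.
pose K rho := m rho * Dt rho.
have hpoisK rho i : is_poisson (N rho i) (K rho * gam i).
  have := hpois rho i; rewrite clkE.
  by rewrite (_ : m rho * clocks Ccoef (xe x) i * lambda i * Dt rho = K rho * gam i) //;
    rewrite /K /gam /gamma_i; ring.
pose cc i : R := (DeltaX i (lift ord0 j))%:~R - x j * (DeltaX i ord0)%:~R.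
pose C1 := \sum_(i < I.+1) `|cc i|.
pose C2 := \sum_(i < I.+1) (`|gam i| + 1) * `|(DeltaX i ord0)%:~R : R|.
pose A := \sum_(i < I.+1) gam i * cc i.
have C10 : 0 <= C1 by rewrite /C1 sumr_ge0.
have C20 : 0 <= C2 by rewrite /C2 sumr_ge0 // => i _; rewrite mulr_ge0 // addr_ge0.
have LA : gamma Ccoef lambda x * nu Ccoef lambda DeltaX x ord0 *
    (xhat Ccoef lambda DeltaX x (lift ord0 j) - x j) = A.
  have gnu k : gamma Ccoef lambda x * nu Ccoef lambda DeltaX x k =
      \sum_(i < I.+1) (DeltaX i k)%:~R * gam i.
    rewrite /nu mulr_sumr; apply: eq_bigr => i _; rewrite /p_i /gam.
    by field.
  rewrite /xhat (_ : _ * (_ - _) = gamma Ccoef lambda x * nu Ccoef lambda DeltaX x (lift ord0 j)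
     - x j * (gamma Ccoef lambda x * nu Ccoef lambda DeltaX x ord0)); last by field.
  rewrite !gnu /A /cc mulr_sumr -sumrB; apply: eq_bigr => i _; ring.
rewrite LA.
pose del := Num.min 1 (eps / (4 * (C1 + 1))).
have del0 : 0 < del by rewrite /del lt_min ltr01 /= divr_gt0 //; lra.
have del1 : del <= 1 by rewrite /del ge_min lexx.
have delC : del * C1 <= eps / 4.
  have : del <= eps / (4 * (C1 + 1)) by rewrite /del ge_min lexx orbT.
  move=> h; have h2 : del * (C1 + 1) <= eps / 4.
    by rewrite -ler_pdivlMr ?mulrA -?mulf_div; lra.
  nra.
pose D0 := Num.min (1 / (2 * (C2 + 1))) (eps / (4 * ((`|A| + 1) * (C2 + 1)))).
have D00 : 0 < D0 by rewrite /D0 lt_min !divr_gt0 // ?mulr_gt0 //; have := normr_ge0 A; lra.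
pose ce i := del / (2 * (gam i + del)) * del / 2.
have ce0 i : 0 < ce i.
  have h : 0 < 2 * (gam i + del) by have := gam0 i; lra.
  apply: divr_gt0; last lra.
  by apply: mulr_gt0 => //; exact: divr_gt0.
pose Cc := \sum_(i < I.+1) (ce i)^-1.
have Cc0 : 0 <= Cc by rewrite /Cc sumr_ge0 // => i _; rewrite invr_ge0 ltW.
apply: ev_cvg0 => [rho|eta eta0]; first exact: measure_ge0.
have [N2 _ HN2] : \forall rho \near \oo, `|Dt rho| < D0.
  by move/cvgr0Pnorm_lt: hD; apply.
pose Mb := 2 * Cc / eta * c0 / kap.
have [N3 _ HN3] : \forall rho \near \oo, Mb <= diam rho by move/cvgryPge: hd; apply.
exists (maxn N1 (maxn N2 N3)) => rho.
rewrite !geq_max => /and3P[h1 h2 h3].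
have Dp := hDpos rho.
have DD0 : Dt rho < D0 by have := HN2 rho h2; rewrite gtr0_norm.
have mr := m_pos rho h1.
have mp : 0 < m rho by lra.
have Kp : 0 < K rho by rewrite /K mulr_gt0.
have Kbig : 2 * Cc / eta <= K rho.
  have e1 : c0^-1 * diam rho ^+ 2 * Dt rho <= K rho.
    by rewrite /K ler_pM2r //; case/andP: (hX rho ord0).
  have e2 : c0^-1 * diam rho ^+ 2 * Dt rho = c0^-1 * kap * diam rho.
    by rewrite -(hkap rho); ring.
  have e3 : c0^-1 * kap * Mb <= c0^-1 * kap * diam rho.
    by rewrite ler_pM2l ?mulr_gt0 //; exact: HN3.
  have e4 : c0^-1 * kap * Mb = 2 * Cc / eta.
    by rewrite /Mb; field; rewrite !gt_eqF.
  lra.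
pose B i := [set w | del <= `|N rho i w / K rho - gam i|].
have mN i : measurable_fun setT (N rho i) by exact: measurable_funPT.
have mB i : measurable (B i).
  apply: far_pre; apply: measurable_realfun.measurable_funM => //; exact: measurable_cst.
have mXn k : measurable_fun setT (Xnew rho k).
  rewrite /Xnew; apply: measurable_realfun.measurable_funD; first exact: measurable_cst.
  apply: measurable_sum => i; apply: measurable_realfun.measurable_funM => //; exact: measurable_cst.
have mY : measurable_fun setT
    (fun w => (Xnew rho (lift ord0 j) w / Xnew rho ord0 w - x j) / Dt rho).
  apply: measurable_realfun.measurable_funM; last exact: measurable_cst.
  apply: measurable_realfun.measurable_funB; last exact: measurable_cst.
  apply: measurable_realfun.measurable_funM => //; exact: measurableT_comp meas_inv (mXn _).
have mbad := @far_pre R dsp T _ A eps mY.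
have sub : [set w | eps <= `|(Xnew rho (lift ord0 j) w / Xnew rho ord0 w - x j) / Dt rho - A|]
    `<=` \big[setU/set0]_(i < I.+1) B i.
  move=> w /= hw; apply: contrapT => hn.
  have he i : `|N rho i w / (m rho * Dt rho) - gam i| < del.
    rewrite ltNge; apply/negP => hi; apply: hn; exact: (@mem_bigsetU_ord _ _ B w i).
  move: hw; rewrite leNgt => /negP; apply.
  have XE k : Xnew rho k w = (X rho k)%:R +
      \sum_(i < I.+1) N rho i w * (DeltaX i k)%:~R by [].
  rewrite !XE hx.
  apply: (@det_core R I.+1 (fun i => (DeltaX i ord0)%:~R)
     (fun i => (DeltaX i (lift ord0 j))%:~R) gam (fun i => N rho i w)
     (m rho) (Dt rho) (x j) del eps mp Dp del0 del1) => //.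
  - by apply: (lt_le_trans DD0); rewrite /D0 ge_min lexx.
  - by apply: (lt_le_trans DD0); rewrite /D0 ge_min lexx orbT.
apply: (@le_trans _ _ (P (\big[setU/set0]_(i < I.+1) B i))).
  apply: le_measure; [rewrite inE; exact: mbad
    | rewrite inE; by apply: bigsetU_measurable => i _; exact: mB
    | by move=> w hw; apply: sub].
apply: (le_trans (@union_bound R dsp T P I.+1 B mB)).
apply: (@le_trans _ _ (\sum_(i < I.+1) ((expR (- (K rho * ce i))) *+ 2)%:E)%E).
  apply: lee_sum => i _.
  exact: (@pois_dev R dsp T P (N rho i) (K rho) (gam i) del Kp (gam0 i) del0 (hpoisK rho i)).
rewrite sumEFin lee_fin.
have hterm i : expR (- (K rho * ce i)) *+ 2 <= 2 * (K rho)^-1 * (ce i)^-1.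
  set y := K rho * ce i.
  have y0 : 0 < y by rewrite /y mulr_gt0.
  have hy : y * expR (- y) <= 1.
    rewrite -(expRxMexpNx_1 y) ler_pM2r ?expR_gt0 //.
    have := expR_ge1Dx y; lra.
  have -> : expR (- y) = (y * expR (- y)) * y^-1 by field; rewrite gt_eqF.
  have : y * expR (- y) * y^-1 <= 1 * y^-1 by apply: ler_wpM2r => //; rewrite invr_ge0 ltW.
  rewrite /y invfM mul1r; move=> h; rewrite mulr2n.
  have -> : 2 * (K rho)^-1 * (ce i)^-1 = (K rho)^-1 * (ce i)^-1 + (K rho)^-1 * (ce i)^-1 by ring.
  by apply: lerD.
apply: (le_trans (ler_sum _ (fun i _ => hterm i))).
rewrite -mulr_sumr -/Cc.
have h : 2 * Cc <= eta * K rho.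
  by move: Kbig; rewrite ler_pdivrMr // [eta * _]mulrC.
rewrite (_ : 2 * (K rho)^-1 * Cc = 2 * Cc / K rho); last by rewrite mulrAC.
by rewrite ler_pdivrMr.
Qed.
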